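(* Assume (A1)–(A4) and let $b$ be consistent. Let $(\hat x,\hat y)$ be any feasible point. Then the real sequence $\{D_{\mu_k}f(\hat y,y_k)\}_{k\ge1}$ generated by the ADMM is convergent.
   Context: $\mathcal X,\mathcal Y,\mathcal H$ are real Hilbert spaces. Standing assumptions: (A1) $A:\mathcal X\to\mathcal H$ is bounded linear. (A2) $f:\mathcal Y\to(-\infty,\infty]$ is proper, lower semicontinuous and strongly convex with constant $c_0>0$: $f(ty_1+(1-t)y_2)+c_0t(1-t)\|y_1-y_2\|^2\le tf(y_1)+(1-t)f(y_2)$ for all $y_1,y_2$, $t\in[0,1]$. (A3) $W:\mathscr D(W)\subset\mathcal X\to\mathcal Y$ is a densely defined closed linear operator. (A4) There is $c_1>0$ with $\|Ax\|^2+\|Wx\|^2\ge c_1\|x\|^2$ for all $x\in\mathscr D(W)$. $\mathscr D(f)=\{y:f(y)<\infty\}$; $b$ is consistent if $b=Ax$ for some $x\in\mathscr D(W)$ with $Wx\in\mathscr D(f)$. A feasible point is a pair $(\hat x,\hat y)$ with $\hat x\in\mathscr D(W)$, $\hat y\in\mathscr D(f)$, $A\hat x=b$, $W\hat x=\hat y$. ADMM: fix $\rho_1,\rho_2>0$ and initial $y_0\in\mathcal Y$, $\lambda_0\in\mathcal H$, $\mu_0\in\mathcal Y$. For $k=0,1,\dots$: $x_{k+1}=\arg\min_{x\in\mathscr D(W)}\{\langle\lambda_k,Ax\rangle+\langle\mu_k,Wx\rangle+\frac{\rho_1}{2}\|Ax-b\|^2+\frac{\rho_2}{2}\|Wx-y_k\|^2\}$,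 $y_{k+1}=\arg\min_{y\in\mathcal Y}\{f(y)-\langle\mu_k,y\rangle+\frac{\rho_2}{2}\|Wx_{k+1}-y\|^2\}$, $\lambda_{k+1}=\lambda_k+\rho_1(Ax_{k+1}-b)$, $\mu_{k+1}=\mu_k+\rho_2(Wx_{k+1}-y_{k+1})$. (These minimizers exist and are unique.) One has $\mu_k\in\partial f(y_k)$ for $k\ge1$. Bregman distance: for $y$ with $\mu\in\partial f(y)$, $D_\mu f(\bar y,y)=f(\bar y)-f(y)-\langle\mu,\bar y-y\rangle$. *)

(* Defs.v *)
From Stdlib Require Import Reals Lra.
Open Scope R_scope.

Record Hilbert := {
  hcar :> Type;
  hzero : hcar;
  hadd : hcar -> hcar -> hcar;
  hopp : hcar -> hcar;
  hscal : R -> hcar -> hcar;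
  hinner : hcar -> hcar -> R;
  hadd_assoc : forall u v w, hadd u (hadd v w) = hadd (hadd u v) w;
  hadd_comm : forall u v, hadd u v = hadd v u;
  hadd_zero : forall u, hadd u hzero = u;
  hadd_opp : forall u, hadd u (hopp u) = hzero;
  hscal_one : forall u, hscal 1 u = u;
  hscal_assoc : forall a b u, hscal a (hscal b u) = hscal (a * b) u;
  hscal_distr_l : forall a u v, hscal a (hadd u v) = hadd (hscal a u) (hscal a v);
  hscal_distr_r : forall a b u, hscal (a + b) u = hadd (hscal a u) (hscal b u);
  hinner_sym : forall u v, hinner u v = hinner v u;
  hinner_add_l : forall u v w, hinner (hadd u v) w = hinner u w + hinner v w;
  hinner_scal_l : forall a u v, hinner (hscal a u) v = a * hinner u v;
  hinner_pos : forall u, 0 <= hinner u u;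
  hinner_def : forall u, hinner u u = 0 -> u = hzero;
  hcomplete : forall s : nat -> hcar,
    (forall eps, eps > 0 -> exists N, forall n m, (n >= N)%nat -> (m >= N)%nat ->
        sqrt (hinner (hadd (s n) (hopp (s m))) (hadd (s n) (hopp (s m)))) < eps) ->
    exists l, forall eps, eps > 0 -> exists N, forall n, (n >= N)%nat ->
        sqrt (hinner (hadd (s n) (hopp l)) (hadd (s n) (hopp l))) < eps
}.

Arguments hzero {h}.
Arguments hadd {h}.
Arguments hopp {h}.
Arguments hscal {h}.
Arguments hinner {h}.

Definition hsub {H : Hilbert} (u v : H) : H := hadd u (hopp v).
Definition hnorm {H : Hilbert} (u : H) : R := sqrt (hinner u u).

Definition is_linear {X Y : Hilbert} (T : X -> Y) : Prop :=
  (forall u v, T (hadd u v) = hadd (T u) (T v)) /\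
  (forall a u, T (hscal a u) = hscal a (T u)).

Definition bounded_linear {X Y : Hilbert} (T : X -> Y) : Prop :=
  is_linear T /\ exists C, forall u, hnorm (T u) <= C * hnorm u.

(* An (unbounded) linear operator W : D(W) ⊂ X -> Y is represented by a domain
   predicate DW and a map W : X -> Y whose values outside DW are irrelevant. *)
Definition linear_subspace {X : Hilbert} (D : X -> Prop) : Prop :=
  D hzero /\ (forall u v, D u -> D v -> D (hadd u v)) /\
  (forall a u, D u -> D (hscal a u)).

Definition densely_defined_closed_linear {X Y : Hilbert}
    (DW : X -> Prop) (W : X -> Y) : Prop :=
  linear_subspace DW /\
  (forall u v, DW u -> DW v -> W (hadd u v) = hadd (W u) (W v)) /\
  (forall a u, DW u -> W (hscal a u) = hscal a (W u)) /\
  (forall x eps, eps > 0 -> exists z, DW z /\ hnorm (hsub x z) < eps) /\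
  (forall (s : nat -> X) (x : X) (y : Y),
     (forall n, DW (s n)) ->
     Un_cv (fun n => hnorm (hsub (s n) x)) 0 ->
     Un_cv (fun n => hnorm (hsub (W (s n)) y)) 0 ->
     DW x /\ W x = y).

Inductive ereal := Fin (r : R) | PInf.

Definition in_dom {Y : Hilbert} (f : Y -> ereal) (y : Y) : Prop :=
  exists r, f y = Fin r.

Definition proper {Y : Hilbert} (f : Y -> ereal) : Prop :=
  exists y, in_dom f y.

Definition ereal_gt (e : ereal) (c : R) : Prop :=
  match e with Fin r => c < r | PInf => True end.

Definition lower_semicontinuous {Y : Hilbert} (f : Y -> ereal) : Prop :=
  forall y c, ereal_gt (f y) c ->
    exists delta, delta > 0 /\ forall z, hnorm (hsub z y) < delta -> ereal_gt (f z) c.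

(* strong convexity with constant c0 (convention 0 * (+oo) = 0; the
   inequality is trivial unless both f y1, f y2 are finite) *)
Definition strongly_convex {Y : Hilbert} (f : Y -> ereal) (c0 : R) : Prop :=
  forall (y1 y2 : Y) (t a1 a2 : R), 0 <= t <= 1 ->
    f y1 = Fin a1 -> f y2 = Fin a2 ->
    exists b, f (hadd (hscal t y1) (hscal (1 - t) y2)) = Fin b /\
      b + c0 * t * (1 - t) * (hnorm (hsub y1 y2))^2 <= t * a1 + (1 - t) * a2.

Definition subdiff {Y : Hilbert} (f : Y -> ereal) (y mu : Y) : Prop :=
  exists a, f y = Fin a /\
    forall z b, f z = Fin b -> a + hinner mu (hsub z y) <= b.

(* real part of an extended real (only used on finite values) *)
Definition real_of (e : ereal) : R := match e with Fin r => r | PInf => 0 end.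

(* Bregman distance D_mu f(ybar, y) = f(ybar) - f(y) - <mu, ybar - y>,
   used only when ybar, y are in dom f *)
Definition bregman {Y : Hilbert} (f : Y -> ereal) (mu ybar y : Y) : R :=
  real_of (f ybar) - real_of (f y) - hinner mu (hsub ybar y).

Definition x_objective {X Y H : Hilbert} (A : X -> H) (W : X -> Y) (b : H)
    (rho1 rho2 : R) (lam : H) (mu y : Y) (x : X) : R :=
  hinner lam (A x) + hinner mu (W x) + rho1 / 2 * (hnorm (hsub (A x) b))^2
  + rho2 / 2 * (hnorm (hsub (W x) y))^2.

Definition y_objective {Y : Hilbert} (f : Y -> ereal) (rho2 : R) (mu w y : Y)
    : R :=
  real_of (f y) - hinner mu y + rho2 / 2 * (hnorm (hsub w y))^2.

Definition is_ADMM_sequence {X Y H : Hilbert} (A : X -> H) (DW : X -> Prop)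
    (W : X -> Y) (f : Y -> ereal) (b : H) (rho1 rho2 : R)
    (x : nat -> X) (y : nat -> Y) (lam : nat -> H) (mu : nat -> Y) : Prop :=
  forall k : nat,
    (DW (x (S k)) /\
     forall z, DW z ->
       x_objective A W b rho1 rho2 (lam k) (mu k) (y k) (x (S k))
       <= x_objective A W b rho1 rho2 (lam k) (mu k) (y k) z) /\
    (* y_{k+1} = argmin over Y of an objective that is +oo outside dom f *)
    (in_dom f (y (S k)) /\
     forall z, in_dom f z ->
       y_objective f rho2 (mu k) (W (x (S k))) (y (S k))
       <= y_objective f rho2 (mu k) (W (x (S k))) z) /\
    lam (S k) = hadd (lam k) (hscal rho1 (hsub (A (x (S k))) b)) /\
    mu (S k) = hadd (mu k) (hscal rho2 (hsub (W (x (S k))) (y (S k)))).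

(* Main.v *)
Require Import Defs.
From Stdlib Require Import Reals Lra Lia.
Open Scope R_scope.

Lemma hinner_add_r (H : Hilbert) (u v w : H) : hinner u (hadd v w) = hinner u v + hinner u w.
Proof. rewrite !(hinner_sym _ u). apply hinner_add_l. Qed.
Lemma hinner_scal_r (H : Hilbert) a (u v : H) : hinner u (hscal a v) = a * hinner u v.
Proof. rewrite !(hinner_sym _ u). apply hinner_scal_l. Qed.
Lemma hscal_zero (H : Hilbert) (u : H) : hscal 0 u = hzero.
Proof.
  set (z := hscal 0 u).
  assert (Hz : z = hadd z z) by (unfold z; rewrite <- hscal_distr_r; f_equal; ring).
  transitivity (hadd z (hadd z (hopp z))).
  - rewrite hadd_opp, hadd_zero. reflexivity.
  - rewrite hadd_assoc, <- Hz. apply hadd_opp.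
Qed.
Lemma hopp_scal (H : Hilbert) (u : H) : hopp u = hscal (-1) u.
Proof.
  symmetry.
  transitivity (hadd (hscal (-1) u) (hadd u (hopp u))).
  - rewrite hadd_opp, hadd_zero. reflexivity.
  - rewrite hadd_assoc.
    assert (E : hadd (hscal (-1) u) u = hzero).
    { rewrite <- (hscal_one _ u) at 2. rewrite <- hscal_distr_r.
      replace (-1 + 1) with 0 by ring. apply hscal_zero. }
    rewrite E, hadd_comm, hadd_zero. reflexivity.
Qed.
Lemma hnorm_sq (H : Hilbert) (u : H) : (hnorm u)^2 = hinner u u.
Proof. unfold hnorm. rewrite pow2_sqrt; [reflexivity| apply hinner_pos]. Qed.

Ltac hexp := unfold hsub in *; rewrite ?hnorm_sq in *; rewrite ?hopp_scal in *;
  repeat (rewrite ?hinner_add_l, ?hinner_add_r, ?hinner_scal_l, ?hinner_scal_r in * ).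
Ltac hexpg := unfold hsub; rewrite ?hnorm_sq; rewrite ?hopp_scal;
  repeat (rewrite ?hinner_add_l, ?hinner_add_r, ?hinner_scal_l, ?hinner_scal_r).

Lemma quad_zero g q : 0 <= q -> (forall t, 0 <= t*g + t*t*q) -> g = 0.
Proof.
  intros Hq Ht. set (t := - g / (1 + q)). specialize (Ht t).
  assert (E : t * (1 + q) = - g) by (unfold t; field; lra).
  assert (E2 : t*g + t*t*q = - (t*t)) by nra.
  assert (t = 0) by nra. nra.
Qed.

Lemma cs (H : Hilbert) (u v : H) : (hinner u v)^2 <= hinner u u * hinner v v.
Proof.
  destruct (Req_dec (hinner v v) 0) as [E|E].
  - apply hinner_def in E. subst v. rewrite <- (hscal_zero _ hzero).
    rewrite hinner_scal_r, hinner_scal_l. nra.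
  - assert (Hp : 0 < hinner v v) by (pose proof (hinner_pos _ v); lra).
    pose proof (hinner_pos _ (hadd (hscal (hinner v v) u) (hscal (- hinner u v) v))) as P.
    rewrite hinner_add_l, !hinner_add_r, !hinner_scal_l, !hinner_scal_r in P.
    rewrite (hinner_sym _ v u) in P.
    set (a := hinner u v) in *. set (c := hinner v v) in *. set (d := hinner u u) in *.
    assert (0 <= c * (d*c - a*a)) by nra.
    assert (0 <= d*c - a*a) by nra.
    nra.
Qed.


Lemma xmin_grad (H Y : Hilbert) (lam : H) (mu : Y) (b : H) (y : Y) (r1 r2 : R)
  (Ax Az : H) (Wx Wz : Y) :
  r1 > 0 -> r2 > 0 ->
  (forall t, hinner lam Ax + hinner mu Wx + r1/2*(hnorm (hsub Ax b))^2 + r2/2*(hnorm (hsub Wx y))^2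
    <= hinner lam (hadd Ax (hscal t Az)) + hinner mu (hadd Wx (hscal t Wz))
       + r1/2*(hnorm (hsub (hadd Ax (hscal t Az)) b))^2 + r2/2*(hnorm (hsub (hadd Wx (hscal t Wz)) y))^2) ->
  hinner (hadd lam (hscal r1 (hsub Ax b))) Az + hinner (hadd mu (hscal r2 (hsub Wx y))) Wz = 0.
Proof.
  intros H1 H2 Hm.
  apply (quad_zero _ (r1/2 * hinner Az Az + r2/2 * hinner Wz Wz)).
  { pose proof (hinner_pos _ Az); pose proof (hinner_pos _ Wz). nra. }
  intro t. specialize (Hm t). hexp.
  rewrite ?(hinner_sym _ Az Ax), ?(hinner_sym _ Az b), ?(hinner_sym _ Ax b),
    ?(hinner_sym _ Wz Wx), ?(hinner_sym _ Wz y), ?(hinner_sym _ Wx y) in *.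
  lra.
Qed.

Lemma ysg (Y : Hilbert) (f : Y -> ereal) (c0 r2 : R) (m w y' z : Y) (fy fz : R) :
  c0 > 0 -> r2 > 0 -> strongly_convex f c0 -> f y' = Fin fy -> f z = Fin fz ->
  (forall z', in_dom f z' -> y_objective f r2 m w y' <= y_objective f r2 m w z') ->
  fy + hinner (hadd m (hscal r2 (hsub w y'))) (hsub z y') + c0/2 * hinner (hsub z y') (hsub z y') <= fz.
Proof.
  intros Hc Hr Hsc Hy Hz Hmin.
  set (t := c0 / (2*c0 + r2)).
  assert (Ht0 : 0 < t) by (unfold t; apply Rdiv_lt_0_compat; lra).
  assert (Ht1 : t < 1) by (unfold t; apply Rmult_lt_reg_r with (2*c0+r2); [lra|];
     unfold Rdiv; rewrite Rmult_assoc, Rinv_l; lra).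
  destruct (Hsc z y' t fz fy ltac:(lra) Hz Hy) as [bb [Hb Hbi]].
  specialize (Hmin _ (ex_intro _ bb Hb)). unfold y_objective in Hmin.
  rewrite Hb, Hy in Hmin. cbv [real_of] in Hmin.
  set (zt := hadd (hscal t z) (hscal (1 - t) y')) in *.
  set (N := hinner (hsub z y') (hsub z y')).
  set (G := hinner (hadd m (hscal r2 (hsub w y'))) (hsub z y')).
  assert (E1 : hinner m zt = t * hinner m z + (1-t) * hinner m y') by (unfold zt; hexpg; ring).
  assert (E2 : hinner (hsub w zt) (hsub w zt) = hinner (hsub w y') (hsub w y')
      - 2 * t * hinner (hsub w y') (hsub z y') + t*t*N).
  { unfold N, zt. hexpg. rewrite ?(hinner_sym _ z w), ?(hinner_sym _ y' w), ?(hinner_sym _ y' z). ring. }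
  assert (E3 : G = hinner m z - hinner m y' + r2 * hinner (hsub w y') (hsub z y')).
  { unfold G. hexpg. ring. }
  repeat rewrite hnorm_sq in Hmin. repeat rewrite hnorm_sq in Hbi. fold N in Hbi. rewrite E1, E2 in Hmin.
  assert (Hz0 : c0*t*(1-t) - r2*t*t/2 - t*c0/2 = 0) by (unfold t; field; lra).
  assert (Hzz : N * (c0*t*(1-t) - r2*t*t/2 - t*c0/2) = 0) by (rewrite Hz0; ring).
  assert (HH : 0 <= t * (fz - fy - G - c0/2 * N)) by (rewrite E3; lra).
  assert (0 <= fz - fy - G - c0/2 * N) by nra.
  lra.
Qed.


Ltac canon5 U1 U2 U3 U4 U5 :=
  rewrite ?(hinner_sym _ U2 U1), ?(hinner_sym _ U3 U1), ?(hinner_sym _ U4 U1), ?(hinner_sym _ U5 U1),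
    ?(hinner_sym _ U3 U2), ?(hinner_sym _ U4 U2), ?(hinner_sym _ U5 U2),
    ?(hinner_sym _ U4 U3), ?(hinner_sym _ U5 U3), ?(hinner_sym _ U5 U4) in *.

Lemma step (Y H : Hilbert) (U1 U2 U3 U4 U5 : Y) (P1 P2 : H) (r1 r2 c al B Dk Dk1 : R) :
 r1 > 0 -> r2 > 0 -> c > 0 -> al * c = r2 + c -> al >= 1 ->
 r1 * hinner P2 P2 + r2 * hinner (hadd (hadd U4 U5) (hscal (-1) U2)) (hadd (hadd U4 U3) U5) = 0 ->
 r1 * hinner P2 (hadd P2 (hscal (-1) P1)) + r2 * hinner (hadd (hadd U4 U5) (hscal (-1) U2)) (hadd (hadd U4 U5) (hscal (-1) U1)) = 0 ->
 Dk1 - Dk = - B + r2 * hinner U4 (hadd U3 U5) ->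
 0 <= B ->
 r2 * hinner U1 U2 >= 2 * c * hinner U2 U2 ->
 Dk1 + r2 * hinner U5 (hadd (hadd U4 U3) U5) + al * (r1 * hinner P2 P2 + r2 * hinner (hadd U4 U5) (hadd U4 U5))
 <= Dk + r2 * hinner U2 (hadd U1 U3) + al * (r1 * hinner P1 P1 + r2 * hinner (hadd U1 U2) (hadd U1 U2))
    - r1 * hinner P2 P2 - r2 * hinner U4 U4 - r2 * hinner U2 U2.
Proof.
  intros Hr1 Hr2 Hc Hal Hal1 HI2 HI3 HD HB HSG.
  set (V := hadd (hadd U4 U5) (hscal (-1) (hadd U1 U2))).
  assert (F1 : hinner U2 V <= hinner V V + hinner U2 U2 / 4).
  { pose proof (hinner_pos _ (hadd (hscal 2 V) (hscal (-1) U2))) as P.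
    rewrite hinner_add_l, !hinner_add_r, !hinner_scal_l, !hinner_scal_r in P.
    rewrite (hinner_sym _ V U2) in P. lra. }
  assert (F1' : r2 * hinner U2 V <= al * r2 * hinner V V + r2 * hinner U2 U2 / 4).
  { pose proof (hinner_pos _ V).
    assert (r2 * hinner U2 V <= r2 * (hinner V V + hinner U2 U2 / 4)) by (apply Rmult_le_compat_l; lra).
    assert (0 <= (al - 1) * r2 * hinner V V) by (repeat apply Rmult_le_pos; lra).
    nra. }
  assert (F2 : 0 <= al * r1 * hinner (hadd P2 (hscal (-1) P1)) (hadd P2 (hscal (-1) P1))).
  { pose proof (hinner_pos _ (hadd P2 (hscal (-1) P1))). apply Rmult_le_pos; [|lra]. nra. }
  assert (F3 : al * (r2 * hinner U1 U2) >= 2 * (r2 + c) * hinner U2 U2).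
  { rewrite <- Hal. pose proof (hinner_pos _ U2). nra. }
  assert (HI3' : al * (r1 * hinner P2 (hadd P2 (hscal (-1) P1)) + r2 * hinner (hadd (hadd U4 U5) (hscal (-1) U2)) (hadd (hadd U4 U5) (hscal (-1) U1))) = 0)
    by (rewrite HI3; ring).
  pose proof (hinner_pos _ U2) as F4.
  assert (F5 : 0 <= c * hinner U2 U2) by (apply Rmult_le_pos; lra).
  assert (F6 : 0 <= r2 * hinner U2 U2) by (apply Rmult_le_pos; lra).
  unfold V in *. clear V.
  hexp. canon5 U1 U2 U3 U4 U5. rewrite ?(hinner_sym _ P2 P1) in *.
  lra.
Qed.

Lemma lowb (Y H : Hilbert) (U1 U2 U3 : Y) (P1 : H) (r1 r2 c al Dk : R) :
 r1 > 0 -> r2 > 0 -> c > 0 -> al * c = r2 + c -> al >= 1 ->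
 Dk >= c * hinner U3 U3 ->
 r2 * hinner U1 U2 >= 2 * c * hinner U2 U2 ->
 Dk + r2 * hinner U2 (hadd U1 U3) + al * (r1 * hinner P1 P1 + r2 * hinner (hadd U1 U2) (hadd U1 U2))
  >= c / 2 * hinner U3 U3.
Proof.
  intros Hr1 Hr2 Hc Hal Hal1 HD HSG.
  pose proof (hinner_pos _ (hadd (hscal c U3) (hscal r2 U2))) as P.
  pose proof (hinner_pos _ (hadd U1 (hscal (-1) U2))) as P2.
  pose proof (hinner_pos _ U1). pose proof (hinner_pos _ U2). pose proof (hinner_pos _ P1).
  pose proof (hinner_pos _ U3).
  hexp. canon5 U1 U2 U3 U3 U3.
  set (a1 := hinner U1 U1) in *. set (a2 := hinner U2 U2) in *. set (a3 := hinner U3 U3) in *.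
  set (b12 := hinner U1 U2) in *. set (b23 := hinner U2 U3) in *. set (b13 := hinner U1 U3) in *.
  set (p := hinner P1 P1) in *.
  assert (K1 : c * r2 * b23 >= - (c*c/2) * a3 - (r2*r2/2) * a2) by nra.
  assert (K2 : al * r2 * (a1 + 2*b12 + a2) >= al * r2 * (a1 + a2)) by (apply Rmult_ge_compat_l; nra).
  assert (K3 : c * (al * r2 * a2) = (r2 + c) * r2 * a2) by (rewrite <- Hal; ring).
  assert (K4 : c * (al * r2 * a1) >= 0) by (apply Rle_ge; apply Rmult_le_pos; [lra|]; apply Rmult_le_pos; nra).
  assert (K5 : c * (r2 * (b12 + b23)) + c * (al * (r1 * p + r2 * (a1 + 2 * b12 + a2))) + c * (Dk - c/2*a3) >= 0).
  { assert (b12 >= 0) by nra.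
    assert (c * (al * r1 * p) >= 0) by (apply Rle_ge; repeat apply Rmult_le_pos; lra).
    assert (c * r2 * b12 >= 0) by (apply Rle_ge; repeat apply Rmult_le_pos; lra).
    assert (c * al * r2 * b12 >= 0) by (apply Rle_ge; repeat apply Rmult_le_pos; lra).
    assert (c * Dk >= c * (c * a3)) by (apply Rmult_ge_compat_l; lra).
    assert (c * r2 * a2 >= 0) by (apply Rle_ge; repeat apply Rmult_le_pos; lra).
    assert (r2 * r2 * a2 >= 0) by (apply Rle_ge; repeat apply Rmult_le_pos; lra).
    lra. }
  assert (Dk + r2 * (b12 + b23) + al * (r1 * p + r2 * (a1 + 2 * b12 + a2)) - c/2*a3 >= 0).
  { apply Rle_ge. apply Rmult_le_reg_l with c; [lra|]. rewrite Rmult_0_r. nra. }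
  lra.
Qed.
Lemma sumsq (Y : Hilbert) (u v : Y) : hinner (hadd u v) (hadd u v) <= 2 * hinner u u + 2 * hinner v v.
Proof.
  pose proof (hinner_pos _ (hadd u (hscal (-1) v))) as P.
  rewrite !hinner_add_l, !hinner_add_r, !hinner_scal_l, !hinner_scal_r in *.
  rewrite (hinner_sym _ v u) in *. lra.
Qed.


Lemma cv_unshift (u : nat -> R) l : Un_cv (fun n => u (S n)) l -> Un_cv u l.
Proof.
  intros H eps He. destruct (H eps He) as [N HN]. exists (S N). intros n Hn.
  destruct n as [|n]; [lia|]. apply HN. lia.
Qed.
Lemma cv_shift (u : nat -> R) l : Un_cv u l -> Un_cv (fun n => u (S n)) l.
Proof.
  intros H eps He. destruct (H eps He) as [N HN]. exists N. intros n Hn. apply HN. lia.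
Qed.
Lemma cv_ext (u v : nat -> R) l : (forall n, u n = v n) -> Un_cv u l -> Un_cv v l.
Proof. intros E H eps He. destruct (H eps He) as [N HN]. exists N. intros n Hn. rewrite <- E. auto. Qed.
Lemma cv_const c : Un_cv (fun _ => c) c.
Proof. intros eps He. exists 0%nat. intros. unfold Rdist. rewrite Rminus_eq_0, Rabs_R0. lra. Qed.
Lemma cv_squeeze0 (u v : nat -> R) : (forall n, 0 <= u n <= v n) -> Un_cv v 0 -> Un_cv u 0.
Proof.
  intros B H eps He. destruct (H eps He) as [N HN]. exists N. intros n Hn.
  specialize (HN n Hn). specialize (B n). unfold Rdist in *. rewrite Rminus_0_r in *.
  rewrite Rabs_right in *; lra.
Qed.
Lemma cv_sq0 (u v : nat -> R) : (forall n, u n * u n <= v n) -> Un_cv v 0 -> Un_cv u 0.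
Proof.
  intros B H eps He. destruct (H (eps*eps) ltac:(nra)) as [N HN]. exists N. intros n Hn.
  specialize (HN n Hn). specialize (B n). unfold Rdist in *. rewrite Rminus_0_r in *.
  assert (v n < eps * eps) by (apply Rabs_def2 in HN; lra).
  assert (Rabs (u n) * Rabs (u n) < eps * eps) by (rewrite <- Rabs_mult, Rabs_right; nra).
  pose proof (Rabs_pos (u n)). nra.
Qed.
Lemma cv_scal0 k (u : nat -> R) : Un_cv u 0 -> Un_cv (fun n => k * u n) 0.
Proof.
  intro H. replace 0 with (k * 0) by ring. apply CV_mult; [apply cv_const | exact H].
Qed.
Lemma cv_plus0 (u v : nat -> R) : Un_cv u 0 -> Un_cv v 0 -> Un_cv (fun n => u n + v n) 0.
Proof. intros. replace 0 with (0 + 0) by ring. apply CV_plus; auto. Qed.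
Lemma cv_decr (u : nat -> R) : (forall n, u (S n) <= u n) -> (forall n, 0 <= u n) -> exists l, Un_cv u l.
Proof.
  intros D P. destruct (decreasing_cv u D) as [l Hl].
  - exists 0. intros r [i ->]. unfold opp_seq. specialize (P i). lra.
  - exists l. exact Hl.
Qed.
Lemma le_div_pos r X Z : r > 0 -> r * X <= Z -> X <= / r * Z.
Proof. intros Hr H. apply Rmult_le_reg_l with r; [lra|]. rewrite <- Rmult_assoc, Rinv_r; lra. Qed.


Ltac hexph H := unfold hsub in H; repeat rewrite hnorm_sq in H; rewrite ?hopp_scal in H;
  repeat (rewrite ?hinner_add_l, ?hinner_add_r, ?hinner_scal_l, ?hinner_scal_r in H).

Theorem lemma2p6 :
  forall (X Y H : Hilbert) (A : X -> H) (f : Y -> ereal) (c0 : R)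
         (DW : X -> Prop) (W : X -> Y) (c1 : R),
    (* (A1) *) bounded_linear A ->
    (* (A2) *) proper f -> lower_semicontinuous f -> c0 > 0 -> strongly_convex f c0 ->
    (* (A3) *) densely_defined_closed_linear DW W ->
    (* (A4) *) c1 > 0 ->
      (forall x, DW x -> (hnorm (A x))^2 + (hnorm (W x))^2 >= c1 * (hnorm x)^2) ->
  forall (b : H),
    (* b is consistent *)
    (exists x, DW x /\ in_dom f (W x) /\ A x = b) ->
  forall (xhat : X) (yhat : Y),
    (* (xhat, yhat) is a feasible point *)
    DW xhat -> in_dom f yhat -> A xhat = b -> W xhat = yhat ->
  forall (rho1 rho2 : R), rho1 > 0 -> rho2 > 0 ->
  forall (x : nat -> X) (y : nat -> Y) (lam : nat -> H) (mu : nat -> Y),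
    is_ADMM_sequence A DW W f b rho1 rho2 x y lam mu ->
    exists L : R,
      Un_cv (fun k => bregman f (mu (S k)) yhat (y (S k))) L.
Proof.
  intros X Y H A f c0 DW W c1 HA Hprop Hlsc Hc0 Hsc HW Hc1 HA4 b Hcons xhat yhat Hxh Hyh HAx HWx
    rho1 rho2 Hr1 Hr2 x y lam mu Hadmm.
  destruct HA as [[HAadd HAscal] _].
  destruct HW as [[HD0 [HDadd HDscal]] [HWadd [HWscal _]]].
  set (c := c0 / 2).
  assert (Hc : c > 0) by (unfold c; lra).
  set (al := (rho2 + c) / c).
  assert (Hal : al * c = rho2 + c) by (unfold al; field; lra).
  assert (Hal1 : al >= 1).
  { unfold al. apply Rle_ge. apply Rmult_le_reg_r with c; [lra|]. unfold Rdiv.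
    rewrite Rmult_assoc, Rinv_l; lra. }
  assert (HFin : forall j, exists fy, f (y (S j)) = Fin fy).
  { intro j. destruct (Hadmm j) as [_ [[Hd _] _]]. exact Hd. }
  assert (SG : forall k z fz, f z = Fin fz ->
     real_of (f (y (S k))) + hinner (mu (S k)) (hsub z (y (S k)))
       + c * hinner (hsub z (y (S k))) (hsub z (y (S k))) <= fz).
  { intros k z fz Hz. destruct (Hadmm k) as [_ [[[fy Hfy] Hymin] [_ Hmu]]].
    rewrite Hfy. cbv [real_of]. rewrite Hmu. unfold c.
    exact (ysg Y f c0 rho2 (mu k) (W (x (S k))) (y (S k)) z fy fz Hc0 Hr2 Hsc Hfy Hz Hymin). }
  assert (DWx : forall k, DW (x (S k))).
  { intro k. destruct (Hadmm k) as [[Hd _] _]. exact Hd. }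
  assert (O : forall k z, DW z ->
     hinner (hadd (lam k) (hscal rho1 (hsub (A (x (S k))) b))) (A z)
     + hinner (hadd (mu k) (hscal rho2 (hsub (W (x (S k))) (y k)))) (W z) = 0).
  { intros k z Hz. destruct (Hadmm k) as [[HxD Hxmin] _].
    apply xmin_grad; [lra|lra|]. intro t.
    assert (Hd : DW (hadd (x (S k)) (hscal t z))) by (apply HDadd; [exact HxD| apply HDscal; exact Hz]).
    specialize (Hxmin _ Hd). unfold x_objective in Hxmin.
    rewrite HAadd, HAscal, (HWadd _ _ HxD (HDscal _ _ Hz)), (HWscal _ _ Hz) in Hxmin.
    exact Hxmin. }
  assert (DO : forall n z, DW z ->
     rho1 * hinner (hsub (A (x (S (S n)))) b) (A z)
     + rho2 * hinner (hadd (hsub (W (x (S (S n)))) (y (S n))) (hsub (y n) (y (S n)))) (W z) = 0).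
  { intros n z Hz. pose proof (O (S n) z Hz) as O1. pose proof (O n z Hz) as O0.
    destruct (Hadmm n) as [_ [_ [Hlam Hmu]]].
    rewrite Hlam, Hmu in O1. hexph O1. hexph O0. hexpg. lra. }
  pose (w' := fun k => hsub (W (x k)) (y k)).
  pose (dd := fun k => hsub (y (S k)) (y k)).
  pose (ee := fun k => hsub (y k) yhat).
  pose (aa := fun k => hsub (A (x k)) b).
  pose (Dn := fun k => bregman f (mu k) yhat (y k)).
  assert (HSG : forall n, rho2 * hinner (w' (S (S n))) (dd (S n)) >= 2 * c * hinner (dd (S n)) (dd (S n))).
  { intro n. destruct (HFin n) as [f1 Hf1]. destruct (HFin (S n)) as [f2 Hf2].
    pose proof (SG (S n) (y (S n)) f1 Hf1) as S1. pose proof (SG n (y (S (S n))) f2 Hf2) as S2.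
    destruct (Hadmm (S n)) as [_ [_ [_ Hmu]]]. rewrite Hmu in S1.
    rewrite Hf2 in S1. rewrite Hf1 in S2. cbv [real_of] in S1, S2.
    unfold w', dd. hexph S1. hexph S2. hexpg. lra. }
  assert (HDb : forall n, Dn (S (S n)) >= c * hinner (ee (S (S n))) (ee (S (S n)))).
  { intro n. destruct Hyh as [fh Hfh]. pose proof (SG (S n) yhat fh Hfh) as S1.
    unfold Dn, ee, bregman. rewrite Hfh. cbv [real_of] in *.
    destruct (HFin (S n)) as [f2 Hf2]. rewrite Hf2 in *.
    hexph S1. hexpg. lra. }
  pose (E := fun n => Dn (S (S n)) + rho2 * hinner (dd (S n)) (hsub (W (x (S (S n)))) yhat)
     + al * (rho1 * hinner (aa (S (S n))) (aa (S (S n)))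
             + rho2 * hinner (hsub (W (x (S (S n)))) (y (S n))) (hsub (W (x (S (S n)))) (y (S n))))).
  assert (Q1 : forall n, hinner (dd (S n)) (hadd (w' (S (S n))) (ee (S (S n))))
                = hinner (dd (S n)) (hsub (W (x (S (S n)))) yhat)).
  { intro n. unfold dd, w', ee. hexpg. lra. }
  assert (Q2 : forall n, hinner (hadd (w' (S (S n))) (dd (S n))) (hadd (w' (S (S n))) (dd (S n)))
                = hinner (hsub (W (x (S (S n)))) (y (S n))) (hsub (W (x (S (S n)))) (y (S n)))).
  { intro n. unfold dd, w'. hexpg. lra. }
  assert (Elow : forall n, E n >= c / 2 * hinner (ee (S (S n))) (ee (S (S n)))).
  { intro n. pose proof (lowb Y H (w' (S (S n))) (dd (S n)) (ee (S (S n))) (aa (S (S n)))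
       rho1 rho2 c al (Dn (S (S n))) Hr1 Hr2 Hc Hal Hal1 (HDb n) (HSG n)) as Lb.
    rewrite Q1, Q2 in Lb. exact Lb. }
  assert (Step : forall n, E (S n) <= E n - rho1 * hinner (aa (S (S (S n)))) (aa (S (S (S n))))
      - rho2 * hinner (w' (S (S (S n)))) (w' (S (S (S n)))) - rho2 * hinner (dd (S n)) (dd (S n))).
  { intro n.
    set (k := S (S n)).
    set (B := real_of (f (y (S k))) - real_of (f (y k)) - hinner (mu k) (hsub (y (S k)) (y k))).
    assert (HI2 : rho1 * hinner (aa (S k)) (aa (S k)) + rho2 * hinner (hadd (hadd (w' (S k)) (dd k)) (hscal (-1) (dd (S n))))
                     (hadd (hadd (w' (S k)) (ee k)) (dd k)) = 0).
    { assert (Hz : DW (hadd (x (S k)) (hscal (-1) xhat))) by (apply HDadd; [apply DWx| apply HDscal; exact Hxh]).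
      pose proof (DO (S n) _ Hz) as D1.
      rewrite HAadd, HAscal, HAx, (HWadd _ _ (DWx k) (HDscal _ _ Hxh)), (HWscal _ _ Hxh), HWx in D1.
      unfold aa, w', dd, ee. hexph D1. hexpg. unfold k in *. lra. }
    assert (HI3 : rho1 * hinner (aa (S k)) (hadd (aa (S k)) (hscal (-1) (aa k)))
                  + rho2 * hinner (hadd (hadd (w' (S k)) (dd k)) (hscal (-1) (dd (S n))))
                     (hadd (hadd (w' (S k)) (dd k)) (hscal (-1) (w' k))) = 0).
    { assert (Hz : DW (hadd (x (S k)) (hscal (-1) (x k)))) by (apply HDadd; [apply DWx| apply HDscal; apply DWx]).
      pose proof (DO (S n) _ Hz) as D1.
      rewrite HAadd, HAscal, (HWadd _ _ (DWx k) (HDscal _ _ (DWx (S n)))), (HWscal _ _ (DWx (S n))) in D1.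
      unfold aa, w', dd, ee. hexph D1. hexpg. unfold k in *. lra. }
    assert (HD : Dn (S k) - Dn k = - B + rho2 * hinner (w' (S k)) (hadd (ee k) (dd k))).
    { destruct (Hadmm k) as [_ [_ [_ Hmu]]]. unfold Dn, bregman, B. rewrite Hmu.
      unfold w', ee, dd. hexpg. lra. }
    assert (HB : 0 <= B).
    { destruct (HFin k) as [f3 Hf3]. pose proof (SG (S n) (y (S k)) f3 Hf3) as S1.
      fold k in S1. pose proof (hinner_pos _ (hsub (y (S k)) (y k))).
      assert (0 <= c * hinner (hsub (y (S k)) (y k)) (hsub (y (S k)) (y k))) by (apply Rmult_le_pos; lra).
      unfold B. rewrite Hf3 in *. cbv [real_of] in *. lra. }
    pose proof (step Y H (w' k) (dd (S n)) (ee k) (w' (S k)) (dd k) (aa k) (aa (S k))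
      rho1 rho2 c al B (Dn k) (Dn (S k)) Hr1 Hr2 Hc Hal Hal1 HI2 HI3 HD HB (HSG n)) as St.
    assert (Q3 : hinner (dd k) (hadd (hadd (w' (S k)) (ee k)) (dd k)) = hinner (dd k) (hsub (W (x (S k))) yhat)).
    { unfold dd, w', ee. hexpg. lra. }
    rewrite Q3 in St. unfold k in St. rewrite (Q2 (S n)), (Q1 n), (Q2 n) in St.
    unfold E. unfold k in *. lra. }
  assert (Edec : forall n, E (S n) <= E n).
  { intro n. pose proof (Step n).
    pose proof (hinner_pos _ (aa (S (S (S n))))). pose proof (hinner_pos _ (w' (S (S (S n))))).
    pose proof (hinner_pos _ (dd (S n))). nra. }
  assert (Epos : forall n, 0 <= E n).
  { intro n. pose proof (Elow n). pose proof (hinner_pos _ (ee (S (S n)))). nra. }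
  destruct (cv_decr E Edec Epos) as [L HL].
  exists L.
  assert (Ebd : forall n, E n <= E 0%nat).
  { induction n as [|n IH]; [lra|]. pose proof (Edec n). lra. }
  assert (Hdiff : Un_cv (fun n => E n - E (S n)) 0).
  { replace 0 with (L - L) by ring. apply CV_minus; [exact HL| apply cv_shift; exact HL]. }
  assert (ga : Un_cv (fun n => hinner (aa (S (S n))) (aa (S (S n)))) 0).
  { apply cv_unshift. apply cv_squeeze0 with (v := fun n => / rho1 * (E n - E (S n))).
    - intro n. split; [apply hinner_pos|]. apply le_div_pos; [lra|].
      pose proof (Step n). pose proof (hinner_pos _ (w' (S (S (S n))))).
      pose proof (hinner_pos _ (dd (S n))). nra.
    - apply cv_scal0. exact Hdiff. }
  assert (gw : Un_cv (fun n => hinner (w' (S (S n))) (w' (S (S n)))) 0).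
  { apply cv_unshift. apply cv_squeeze0 with (v := fun n => / rho2 * (E n - E (S n))).
    - intro n. split; [apply hinner_pos|]. apply le_div_pos; [lra|].
      pose proof (Step n). pose proof (hinner_pos _ (aa (S (S (S n))))).
      pose proof (hinner_pos _ (dd (S n))). nra.
    - apply cv_scal0. exact Hdiff. }
  assert (gd : Un_cv (fun n => hinner (dd (S n)) (dd (S n))) 0).
  { apply cv_squeeze0 with (v := fun n => / rho2 * (E n - E (S n))).
    - intro n. split; [apply hinner_pos|]. apply le_div_pos; [lra|].
      pose proof (Step n). pose proof (hinner_pos _ (aa (S (S (S n))))).
      pose proof (hinner_pos _ (w' (S (S (S n))))). nra.
    - apply cv_scal0. exact Hdiff. }
  assert (gP : Un_cv (fun n => hinner (hsub (W (x (S (S n)))) (y (S n))) (hsub (W (x (S (S n)))) (y (S n)))) 0).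
  { apply cv_squeeze0 with (v := fun n => 2 * hinner (w' (S (S n))) (w' (S (S n))) + 2 * hinner (dd (S n)) (dd (S n))).
    - intro n. split; [apply hinner_pos|]. rewrite <- Q2. apply sumsq.
    - apply cv_plus0; apply cv_scal0; assumption. }
  assert (gS : Un_cv (fun n => hinner (dd (S n)) (hsub (W (x (S (S n)))) yhat)) 0).
  { apply cv_sq0 with (v := fun n => hinner (dd (S n)) (dd (S n)) *
        (2 * hinner (w' (S (S n))) (w' (S (S n))) + 4 / c * E 0%nat)).
    - intro n. rewrite <- Q1.
      pose proof (cs Y (dd (S n)) (hadd (w' (S (S n))) (ee (S (S n))))) as C1.
      pose proof (sumsq Y (w' (S (S n))) (ee (S (S n)))) as C2.
      pose proof (Elow n). pose proof (Ebd n).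
      assert (C3 : hinner (ee (S (S n))) (ee (S (S n))) <= 2 / c * E 0%nat).
      { apply Rmult_le_reg_l with (c/2); [lra|].
        replace (c / 2 * (2 / c * E 0%nat)) with (E 0%nat) by (field; lra). lra. }
      pose proof (hinner_pos _ (dd (S n))).
      assert (C4 : hinner (hadd (w' (S (S n))) (ee (S (S n)))) (hadd (w' (S (S n))) (ee (S (S n))))
                  <= 2 * hinner (w' (S (S n))) (w' (S (S n))) + 4 / c * E 0%nat).
      { replace (4 / c * E 0%nat) with (2 * (2 / c * E 0%nat)) by (field; lra). lra. }
      assert (C5 : hinner (dd (S n)) (dd (S n)) * hinner (hadd (w' (S (S n))) (ee (S (S n)))) (hadd (w' (S (S n))) (ee (S (S n))))
                  <= hinner (dd (S n)) (dd (S n)) * (2 * hinner (w' (S (S n))) (w' (S (S n))) + 4 / c * E 0%nat))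
        by (apply Rmult_le_compat_l; lra).
      simpl in C1. lra.
    - replace 0 with (0 * (0 + 4 / c * E 0%nat)) by ring.
      apply CV_mult; [exact gd|]. apply CV_plus; [apply cv_scal0; exact gw| apply cv_const]. }
  apply cv_unshift.
  apply cv_ext with (u := fun n => E n - (rho2 * hinner (dd (S n)) (hsub (W (x (S (S n)))) yhat)
       + al * (rho1 * hinner (aa (S (S n))) (aa (S (S n)))
             + rho2 * hinner (hsub (W (x (S (S n)))) (y (S n))) (hsub (W (x (S (S n)))) (y (S n)))))).
  { intro n. unfold E, Dn. ring. }
  replace L with (L - 0) by ring. apply CV_minus; [exact HL|].
  apply cv_plus0; [apply cv_scal0; exact gS|]. apply cv_scal0. apply cv_plus0; apply cv_scal0; assumption.
Qed.
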